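(* Let $(\Omega,\mathcal G,\mathbb P)$ be a probability space, $\mathcal F=(\mathcal F_t)_{t\in[0,\infty)}$ a filtration with $\mathcal F_\infty\subset\mathcal G$, and $X$ an $\mathbb R^d$-valued Lévy process relative to $\mathcal F$. Let $R:\Omega\to[0,\infty]$ be $\mathcal G$-measurable with $\mathbb P(R<\infty)>0$ and $\mathbb P'(\cdot):=\mathbb P(\cdot\mid R<\infty)$ on $\mathcal G|_{\{R<\infty\}}$. (I) Suppose $\mathcal F_R'$ is independent of $\Delta_RX$ under $\mathbb P'$, and let $P:\Omega\to[0,\infty]$ be $\mathcal G$-measurable with $\mathbb P(P<\infty)>0$ and $\llbracket P\rrbracket=A\cap\llbracket R\rrbracket$ for some $A\in\mathcal O\cup\sigma_{\Omega\times[0,\infty)}(\blacktriangle X)$. Set $\mathcal L'$ to be the law of $\Delta_RX$ under $\mathbb P'$ and $\mathbb P^{:}(F):=\mathbb P(F\mid P<\infty)$ for $F\in\mathcal G|_{\{P<\infty\}}$. (a) If $A\in\mathcal O$, then $\Delta_PX$ is independent of $\mathcal F_P'$ under $\mathbb P^{:}$ and the law of $\Delta_PX$ under $\mathbb P^{:}$ is $\mathcal L'$. (b) If $A=(\blacktriangle X)^{-1}(\Gamma)$ for some $\Gamma\in\mathcal D$, then $\Delta_PX$ is independent of $\mathcal F_P'$ under $\mathbb P^{:}$ and the law of $\Delta_PX$ under $\mathbb P^{:}$ is $\mathcal L'(\cdot\mid\Gamma)$. (II) Conversely, let $R_1,R_2:\Omega\to[0,\infty]$ be $\mathcal G$-measurable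 with $\mathbb P(R_i<\infty)>0$, set $\mathbb P^i(F):=\mathbb P(F\mid R_i<\infty)$ for $F\in\mathcal G|_{\{R_i<\infty\}}$, and suppose $\Delta_{R_i}X$ is independent of $\mathcal F_{R_i}'$ under $\mathbb P^i$ for $i\in\{1,2\}$. (i) If there is $A\in\mathcal O$ with, up to evanescence, $\llbracket R_1\rrbracket=\llbracket R\rrbracket\cap A$ and $\llbracket R_2\rrbracket=\llbracket R\rrbracket\cap A^c$, and if the law $\mathcal M$ of $\Delta_{R_1}X$ under $\mathbb P^1$ equals the law of $\Delta_{R_2}X$ under $\mathbb P^2$, then $\mathcal F_R'$ is independent of $\Delta_RX$ under $\mathbb P'$ and the law of $\Delta_RX$ under $\mathbb P'$ is $\mathcal M$. (ii) If there is $\Gamma\in\mathcal D$ with $\llbracket R_1\rrbracket=\llbracket R\rrbracket\cap\{\blacktriangle X\in\Gamma\}$ and $\llbracket R_2\rrbracket=\llbracket R\rrbracket\cap\{\blacktriangle X\notin\Gamma\}$, if $\mathcal F_R'$ is independent of $\mathbb 1_\Gamma(\Delta_RX)$ under $\mathbb P'$, and if there is a probability law $\mathcal M$ on $(\mathbb D,\mathcal D)$ with $\mathbb P'(\Delta_RX\in\Gamma)=\mathcal M(\Gamma)$, the law of $\Delta_{R_1}X$ under $\mathbb P^1$ equal to $\mathcal M(\cdot\mid\Gamma)$ and the law of $\Delta_{R_2}X$ under $\mathbb P^2$ equal to $\mathcal M(\cdot\mid\mathbb D\setminus\Gamma)$, then $\mathcal F_R'$ is independent of $\Delta_RX$ under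 $\mathbb P'$ and the law of $\Delta_RX$ under $\mathbb P'$ is $\mathcal M$.
   Context: $X$ being a Lévy process relative to $\mathcal F$ means: $X$ is $\mathcal F$-adapted, has càdlàg paths, $X_0=0$ a.s., and for $0\le s\le t$, $X_t-X_s$ is independent of $\mathcal F_s$ and has the law of $X_{t-s}$. $(\mathbb D,\mathcal D)$ is the space of càdlàg paths $[0,\infty)\to\mathbb R^d$ with the $\sigma$-field generated by the coordinate projections. For a random time $S$, on $\{S<\infty\}$, $\Delta_SX:=(X_{S+t}-X_S)_{t\ge0}$; $\blacktriangle X:\Omega\times[0,\infty)\to\mathbb D$ is $(\omega,t)\mapsto\Delta_tX(\omega)$, and $\sigma_{\Omega\times[0,\infty)}(\blacktriangle X)$ is the $\sigma$-field it generates. $\mathcal O$ is the optional $\sigma$-field on $\Omega\times[0,\infty)$, generated by the $\mathcal F$-adapted càdlàg real processes. For a random time $S$, $\mathcal F_S'$ is the $\sigma$-field on $\{S<\infty\}$ generated by $Z_S$ as $Z$ ranges over $\mathcal O$-measurable real processes. $\llbracket S\rrbracket=\{(\omega,t):S(\omega)=t\}$ is the graph of $S$ (in $\Omega\times[0,\infty)$). ''Up to evanescence'' means up to a set whose projection on $\Omega$ is contained in a $\mathbb P$-null set. *)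

(* Defs.v *)
From HB Require Import structures.
From mathcomp Require Import all_boot all_order all_algebra.
From mathcomp Require Import all_classical all_reals all_analysis.
From mathcomp Require Import measurable_realfun.
Set Implicit Arguments. Unset Strict Implicit. Unset Printing Implicit Defensive.
Import Order.TTheory GRing.Theory Num.Theory.
Import numFieldNormedType.Exports.
Local Open Scope classical_set_scope.
Local Open Scope ring_scope.

Section Defs.
Variables (R : realType) (d : nat).

Definition cadlag {V : topologicalType} (f : R -> V) : Prop :=
  forall t : R, 0 <= t ->
    (f @ at_right t --> f t) /\ (0 < t -> exists l : V, f @ at_left t --> l).

Definition is_path (f : R -> 'rV[R]_d) : Prop :=
  cadlag f /\ (forall t, t < 0 -> f t = 0).

Definition Dpath := {f : R -> 'rV[R]_d | `[< is_path f >]}.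
HB.instance Definition _ := [Choice of Dpath by <:].

Lemma path0_subproof : `[< is_path (fun _ => 0) >].
Proof.
apply/asboolP; split => // t _; split; first exact: cvg_cst.
by move=> _; exists 0; exact: cvg_cst.
Qed.

Definition path0 : Dpath := exist _ (fun _ => 0) path0_subproof.
HB.instance Definition _ := isPointed.Build Dpath path0.

Definition borelV : set (set 'rV[R]_d) :=
  smallest (sigma_algebra setT) (@open 'rV[R]_d).

Definition coordG : set (set Dpath) :=
  [set A | exists t B, [/\ 0 <= t, borelV B & A = [set w | B (sval w t)]]].

Definition Dsp := g_sigma_algebraType coordG.

Definition shiftpath (x : R -> 'rV[R]_d) (s : R) : Dsp :=
  insubd path0 (fun t => if 0 <= t then x (s + t) - x s else 0).


End Defs.

Section ProbDefs.
Context (R : realType) (d : nat) (dO : measure_display) (Omega : measurableType dO).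

Definition filtration (F : R -> set (set Omega)) : Prop :=
  [/\ (forall t, (0 <= t)%R -> sigma_algebra setT (F t)),
      (forall s t, (0 <= s)%R -> (s <= t)%R -> F s `<=` F t) &
      (forall t, (0 <= t)%R -> F t `<=` measurable)].

Definition levy (P : probability Omega R) (F : R -> set (set Omega))
    (X : R -> Omega -> 'rV[R]_d) : Prop :=
  [/\ (forall t, (0 <= t)%R -> forall B, borelV B -> F t (X t @^-1` B)),
      (forall w, cadlag (fun t => X t w)),
      {ae P, forall w, X 0%R w = 0%R},
      (forall s t, (0 <= s)%R -> (s <= t)%R -> forall A B, F s A -> borelV B ->
         P (A `&` (fun w => X t w - X s w) @^-1` B) =
         (P A * P ((fun w => X t w - X s w)%R @^-1` B))%E) &
      (forall s t, (0 <= s)%R -> (s <= t)%R -> forall B, borelV B ->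
         P ((fun w => X t w - X s w)%R @^-1` B) = P (X (t - s)%R @^-1` B))].

Definition halfline : set (Omega * R) := [set p | (0 <= p.2)%R].

Definition adapted_cadlag (F : R -> set (set Omega)) (Z : R -> Omega -> R) : Prop :=
  (forall t, (0 <= t)%R -> forall B : set R, measurable B -> F t (Z t @^-1` B)) /\
  (forall w, cadlag (fun t => Z t w)).

Definition optional (F : R -> set (set Omega)) : set (set (Omega * R)) :=
  smallest (sigma_algebra halfline)
    [set A | exists Z B, [/\ adapted_cadlag F Z, measurable B &
                  A = [set p | (0 <= p.2)%R /\ B (Z p.2 p.1)]]].

Definition optional_meas (F : R -> set (set Omega)) (Z : Omega * R -> R) : Prop :=
  forall B : set R, measurable B -> optional F [set p | (0 <= p.2)%R /\ B (Z p)].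

Definition fin (S : Omega -> \bar R) : set Omega := [set w | (S w < +oo)%E].

Definition stopped_field (F : R -> set (set Omega)) (S : Omega -> \bar R) :
    set (set Omega) :=
  smallest (sigma_algebra (fin S))
    [set A | exists Z B, [/\ optional_meas F Z, measurable B &
                  A = [set w | (S w < +oo)%E /\ B (Z (w, fine (S w)))]]].

Definition graph (S : Omega -> \bar R) : set (Omega * R) :=
  [set p | S p.1 = (p.2)%:E].

Definition Delta (X : R -> Omega -> 'rV[R]_d) (S : Omega -> \bar R) :
    Omega -> Dsp R d :=
  fun w => shiftpath (fun t => X t w) (fine (S w)).

Definition btpre (X : R -> Omega -> 'rV[R]_d) (G : set (Dsp R d)) :
    set (Omega * R) :=
  [set p | (0 <= p.2)%R /\ G (shiftpath (fun t => X t p.1) p.2)].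

Definition condP (P : probability Omega R) (C A : set Omega) : R :=
  (fine (P (A `&` C)) / fine (P C))%R.

Definition indep_cond (P : probability Omega R) (C : set Omega)
    (H K : set (set Omega)) : Prop :=
  forall A B, H A -> K B ->
    condP P C (A `&` B) = (condP P C A * condP P C B)%R.

Definition sigmaD (C : set Omega) (Y : Omega -> Dsp R d) : set (set Omega) :=
  [set A | exists G, measurable G /\ A = C `&` Y @^-1` G].

Definition sigmaR (C : set Omega) (Y : Omega -> R) : set (set Omega) :=
  [set A | exists B : set R, measurable B /\ A = C `&` Y @^-1` B].

Definition evanescent (P : probability Omega R) (E : set (Omega * R)) : Prop :=
  exists N, [/\ measurable N, P N = 0%E & [set w | exists t, E (w, t)] `<=` N].

Definition eq_evan (P : probability Omega R) (A B : set (Omega * R)) : Prop :=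
  evanescent P ((A `\` B) `|` (B `\` A)).

End ProbDefs.
Arguments halfline {R dO Omega}.

(* Main.v *)
Require Import Defs.
From HB Require Import structures.
From mathcomp Require Import all_boot all_order all_algebra.
From mathcomp Require Import all_classical all_reals all_analysis.
From mathcomp Require Import measurable_realfun.
From mathcomp Require Import lra ring.
Import Order.TTheory GRing.Theory Num.Theory.
Import numFieldNormedType.Exports.
Local Open Scope classical_set_scope.
Local Open Scope ring_scope.
Set Implicit Arguments. Unset Strict Implicit. Unset Printing Implicit Defensive.
Section SigmaHelp.
Context {T : Type}.
Implicit Types (D : set T) (H : set (set T)).

Lemma sa_top D H : sigma_algebra D H -> H D.
Proof. by case=> H0 HC _; rewrite -(setD0 D); apply: HC. Qed.

Lemma sa_U D H A B : sigma_algebra D H -> H A -> H B -> H (A `|` B).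
Proof. by case=> H0 _ HU hA hB; rewrite -bigcup2E; apply: HU => -[|[|n]]. Qed.

Lemma sa_sub D G A : (forall B, G B -> B `<=` D) -> smallest (sigma_algebra D) G A -> A `<=` D.
Proof.
move=> GD; apply: (smallest_sub (X := [set B | B `<=` D])) => //.
split => /=; first exact: sub0set.
  by move=> B _ x [].
by move=> F hF x [n _ /hF].
Qed.

Lemma sa_I D H A B : sigma_algebra D H -> A `<=` D -> B `<=` D -> H A -> H B -> H (A `&` B).
Proof.
move=> sH AD BD hA hB.
have -> : A `&` B = D `\` ((D `\` A) `|` (D `\` B)).
  apply/seteqP; split=> [x [Ax Bx]|x [Dx nx]].
    by split; [exact: AD| move=> [[_ /(_ Ax)]|[_ /(_ Bx)]]].
  by split; apply: contrapT => nA; apply: nx; [left|right].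
have sH' := sH; case: sH' => _ HC _; apply: (HC); apply: (sa_U sH); exact: (HC).
Qed.

Lemma smallest_gen (C : set (set T) -> Prop) (G : set (set T)) A : G A -> smallest C G A.
Proof. by move=> GA X [_ GX]; exact: GX GA. Qed.
End SigmaHelp.


Section VMeas.
Context (R : realType) (d : nat) (dO : measure_display) (Omega : measurableType dO).
Local Notation V := 'rV[R]_d.
Definition vmeas (f : Omega -> V) := forall B, @borelV R d B -> measurable (f @^-1` B).

Lemma vmeas_open f : (forall U, open U -> measurable (f @^-1` U)) -> vmeas f.
Proof.
move=> hU B hB; apply: (smallest_sub (X := [set B | measurable (f @^-1` B)]) _ _ hB) => //.
split => //=.
- by rewrite preimage_set0.
- by move=> A hA; rewrite setTD preimage_setC; exact: measurableC.
- by move=> F hF; rewrite preimage_bigcup; exact: bigcupT_measurable.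
Qed.

Lemma borelV_open (U : set V) : open U -> @borelV R d U.
Proof. by move=> oU; apply: smallest_gen. Qed.

Lemma vmeas_lim (f_ : nat -> Omega -> V) (f : Omega -> V) :
  (forall n, vmeas (f_ n)) -> (forall w, (fun n => f_ n w) @ \oo --> f w) -> vmeas f.
Proof.
move=> hn hc; apply: vmeas_open => U oU.
pose r (m : nat) : R := m.+1%:R^-1.
have r0 m : 0 < r m by rewrite /r invr_gt0.
pose W (m : nat) := [set x : V | exists y, ball y (2 * r m) `<=` U /\ ball y (r m) x].
have oW m : open (W m).
  have -> : W m = \bigcup_(y in [set y | ball y (2 * r m) `<=` U]) ball y (r m).
    by apply/seteqP; split => x; [move=> [y [? ?]]; exists y|move=> [y ? ?]; exists y].
  by apply: bigcup_open => y _; exact: ball_open.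
have -> : f @^-1` U = \bigcup_m \bigcup_N \bigcap_k (f_ (N + k)%N @^-1` W m).
  apply/seteqP; split => w /=.
    move=> Uw.
    have : nbhs (f w) U by apply: open_nbhs_nbhs; split.
    move=> /nbhs_ballP [e /= e0 he].
    have [m hm] : exists m, r m < e / 2.
      have e20 : 0 < e / 2 by rewrite divr_gt0.
      have [N _ hN] := near_infty_natSinv_lt (PosNum e20).
      by exists N; rewrite /r; exact: (hN N (leqnn N)).
    move/cvgrPdist_lt : (hc w) => /(_ (r m) (r0 m)) [N _ hN].
    exists m => //; exists N => // k _.
    exists (f w); split.
      apply: subset_trans he; apply: le_ball.
      by apply: ltW; lra.
    by rewrite -ball_normE /=; apply: hN; exact: leq_addr.
  move=> [m _ [N _ hN]].
  move/cvgrPdist_lt : (hc w) => /(_ (r m) (r0 m)) [N' _ hN'].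
  have [y [yU yb]] := hN N' I.
  apply: yU; rewrite -ball_normE /=.
  have h2 := hN' (N + N')%N (leq_addl _ _).
  move: yb; rewrite -ball_normE /= => h1.
  rewrite (le_lt_trans (y := `|y - f_ (N + N')%N w| + `|f_ (N + N')%N w - f w|)) //.
    exact: ler_distD.
  rewrite distrC in h2; lra.
apply: bigcupT_measurable => m; apply: bigcupT_measurable => N.
apply: bigcapT_measurable => k; apply: hn; exact: borelV_open.
Qed.
End VMeas.
Section VMeas2.
Context (R : realType) (d : nat) (dO : measure_display) (Omega : measurableType dO).
Local Notation V := 'rV[R]_d.

Lemma rat_approx (x : V) (r : R) : 0 < r -> exists q : 'rV[rat]_d, `|x - map_mx ratr q| < r.
Proof.
move=> r0.
have /choice [qf hq] : forall j : 'I_d, exists q : rat, ratr q \in `](x 0 j - r), (x 0 j + r)[.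
  by move=> j; apply: rat_in_itvoo; lra.
exists (\row_j qf j).
have -> : `|x - map_mx ratr (\row_j qf j)| = mx_norm (x - map_mx ratr (\row_j qf j)) by [].
rewrite mx_normrE; apply: bigmax_lt => //= -[i j] _ /=.
rewrite !mxE (ord1 i); move: (hq j); rewrite in_itv /= => /andP[h1 h2].
rewrite ltr_norml; apply/andP; split; lra.
Qed.

Lemma vmeasB (g h : Omega -> V) : vmeas g -> vmeas h -> vmeas (fun w => g w - h w).
Proof.
move=> mg mh; apply: vmeas_open => U oU.
pose r (m : nat) : R := m.+1%:R^-1.
have r0 m : 0 < r m by rewrite /r invr_gt0.
pose Q (q : 'rV[rat]_d) : V := map_mx ratr q.
pose S (m : nat) (q : 'rV[rat]_d) := [set x : V | exists z, ball (Q q - z) (3 * r m) `<=` U /\ ball z (r m) x].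
have oS m q : open (S m q).
  have -> : S m q = \bigcup_(z in [set z | ball (Q q - z) (3 * r m) `<=` U]) ball z (r m).
    by apply/seteqP; split => x; [move=> [y [? ?]]; exists y|move=> [y ? ?]; exists y].
  by apply: bigcup_open => y _; exact: ball_open.
pose T m q := g @^-1` ball (Q q) (r m) `&` h @^-1` S m q.
have -> : (fun w => g w - h w) @^-1` U =
   \bigcup_m \bigcup_n (if @unpickle 'rV[rat]_d n is Some q then T m q else set0).
  apply/seteqP; split => w /=.
    move=> Uw.
    have : nbhs (g w - h w) U by apply: open_nbhs_nbhs; split.
    move=> /nbhs_ballP [e /= e0 he].
    have [m hm] : exists m, r m < e / 5.
      have e20 : 0 < e / 5 by rewrite divr_gt0.
      have [N _ hN] := near_infty_natSinv_lt (PosNum e20).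
      by exists N; rewrite /r; exact: (hN N (leqnn N)).
    have [q hq] := rat_approx (g w) (r0 m).
    exists m => //; exists (pickle q) => //; rewrite pickleK; split => /=.
      by rewrite -ball_normE /= distrC.
    exists (h w); split; last by rewrite -ball_normE /= subrr normr0.
    move=> y; rewrite -ball_normE /= => hy; apply: he; rewrite -ball_normE /=.
    have := ler_distD (Q q - h w) (g w - h w) y.
    have -> : g w - h w - (Q q - h w) = g w - Q q by rewrite opprB addrA subrK.
    by move=> h3; lra.
  move=> [m _ [n _]]; case: (unpickle n) => [q|//] [/= h1 [z [zU hz]]].
  apply: zU; move: h1 hz; rewrite -!ball_normE /= => h1 hz.
  rewrite opprB [h w - g w]addrC addrACA [- z + _]addrC.
  apply: (le_lt_trans (ler_normD _ _)); rewrite distrC in hz; have := r0 m; lra.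
apply: bigcupT_measurable => m; apply: bigcupT_measurable => n.
case: (unpickle n) => [q|//]; apply: measurableI.
  by apply: mg; apply: borelV_open; exact: ball_open.
by apply: mh; apply: borelV_open.
Qed.
End VMeas2.
Section Approx.
Context (R : realType).
Definition tn (n : nat) (x : R) : R := (Num.trunc (x * n.+1%:R)).+1%:R / n.+1%:R.

Lemma tn_gt n (x : R) : x < tn n x.
Proof.
rewrite /tn ltr_pdivlMr ?ltr0Sn //; exact: truncnS_gt.
Qed.

Lemma tn_le n (x : R) : 0 <= x -> tn n x <= x + n.+1%:R^-1.
Proof.
move=> x0; rewrite /tn ler_pdivrMr ?ltr0Sn // mulrDl mulVf ?pnatr_eq0 //.
have [h _] := andP (truncn_itv (mulr_ge0 x0 (ler0n _ n.+1))).
by rewrite -addn1 natrD lerD2r.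
Qed.

Lemma tn_cvg (x : R) : 0 <= x -> tn n x @[n --> \oo] --> x.
Proof.
move=> x0; apply/cvgrPdist_lt => e e0.
have := near_infty_natSinv_lt (PosNum e0); apply: filterS => n /= hn.
have h1 := tn_gt n x; have h2 := tn_le n x0.
have hn' : n.+1%:R^-1 < e := hn.
have e0' : (0:R) < e := e0.
rewrite ltr_norml; apply/andP; split.
  move: h2 hn'; set t := n.+1%:R^-1 => h2 hn'; lra.
by rewrite (lt_trans _ e0') // subr_lt0.
Qed.

Lemma tn_eq n (x : R) k : k%:R / n.+1%:R <= x < k.+1%:R / n.+1%:R -> tn n x = k.+1%:R / n.+1%:R.
Proof.
move=> /andP[h1 h2]; rewrite /tn (@truncn_def _ _ k) //.
by rewrite -ler_pdivrMr ?ltr0Sn // -ltr_pdivlMr ?ltr0Sn // h1 h2.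
Qed.

Lemma tn_ex n (x : R) : 0 <= x -> exists k, k%:R / n.+1%:R <= x < k.+1%:R / n.+1%:R.
Proof.
move=> x0; exists (Num.trunc (x * n.+1%:R)).
have /andP[h1 h2] := truncn_itv (mulr_ge0 x0 (ler0n _ n.+1)).
by rewrite ler_pdivrMr ?ltr0Sn // ltr_pdivlMr ?ltr0Sn // h1 h2.
Qed.

Lemma seq_at_right (T : topologicalType) (f : R -> T) (x : R) (u : nat -> R) :
  f @ x^'+ --> f x -> (forall n, x < u n) -> u n @[n --> \oo] --> x ->
  f (u n) @[n --> \oo] --> f x.
Proof.
move=> hf ux hu.
have hu' : u n @[n --> \oo] --> x^'+.
  move=> A hA.
  case: (hu _ hA) => N _ hN; exists N => // n /hN /= h; exact: (h (ux n)).
exact: (cvg_comp _ _ hu' hf).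
Qed.

Lemma shift_right (s t : R) : (fun u => s + u) @ t^'+ --> (s + t)^'+.
Proof.
move=> A /nbhs_right0P hA; apply/nbhs_right0P.
by apply: filterS hA => e /=; rewrite addrA.
Qed.

Lemma shift_left (s t : R) : (fun u => s + u) @ t^'- --> (s + t)^'-.
Proof.
move=> A /nbhs_left0P hA; apply/nbhs_left0P.
by apply: filterS hA => e /=; rewrite addrA.
Qed.

Context (dO : measure_display) (Omega : measurableType dO).

Lemma approx_pre (T' : Type) (Y : R -> Omega -> T') (tau : Omega -> R) n B :
  measurable_fun setT tau -> (forall w, 0 <= tau w) ->
  (forall u, 0 <= u -> measurable (Y u @^-1` B)) ->
  measurable ((fun w => Y (tn n (tau w)) w) @^-1` B).
Proof.
move=> mt t0 hY.
have -> : (fun w => Y (tn n (tau w)) w) @^-1` B =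
  \bigcup_k (tau @^-1` [set` Interval (BLeft (k%:R / n.+1%:R)) (BLeft (k.+1%:R / n.+1%:R))]
            `&` Y (k.+1%:R / n.+1%:R) @^-1` B).
  apply/seteqP; split => w /=.
    move=> hB; have [k hk] := tn_ex n (t0 w); exists k => //; split => /=.
      by rewrite in_itv /= hk.
    by rewrite -(tn_eq hk).
  move=> [k _ [/= hk hB]]; move: hk; rewrite in_itv /= => hk.
  by rewrite (tn_eq hk).
apply: bigcupT_measurable => k; apply: measurableI.
  by rewrite -(setTI (_ @^-1` _)); apply: mt => //; exact: measurable_itv.
by apply: hY; apply: divr_ge0.
Qed.

Lemma vmeas_rt d (Y : R -> Omega -> 'rV[R]_d) (tau : Omega -> R) :
  measurable_fun setT tau -> (forall w, 0 <= tau w) ->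
  (forall u, 0 <= u -> vmeas (Y u)) ->
  (forall w u, 0 <= u -> (fun t => Y t w) @ u^'+ --> Y u w) ->
  vmeas (fun w => Y (tau w) w).
Proof.
move=> mt t0 hY hrc.
apply: (@vmeas_lim _ _ _ _ (fun n w => Y (tn n (tau w)) w)).
  move=> n B hB; apply: approx_pre => // u u0; exact: hY.
move=> w; apply: (seq_at_right (f := fun t => Y t w)).
- exact: hrc.
- by move=> n; exact: tn_gt.
- exact: tn_cvg.
Qed.

Lemma rmeas_rt (Z : R -> Omega -> R) (tau : Omega -> R) :
  measurable_fun setT tau -> (forall w, 0 <= tau w) ->
  (forall u, 0 <= u -> measurable_fun setT (Z u)) ->
  (forall w u, 0 <= u -> (fun t => Z t w) @ u^'+ --> Z u w) ->
  measurable_fun setT (fun w => Z (tau w) w).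
Proof.
move=> mt t0 hZ hrc.
apply: (@measurable_fun_cvg _ _ _ _ (fun n w => Z (tn n (tau w)) w)).
  move=> n _ B hB; rewrite setTI; apply: approx_pre => // u u0.
  by rewrite -(setTI (_ @^-1` _)); exact: hZ.
move=> w _; apply: (seq_at_right (f := fun t => Z t w)).
- exact: hrc.
- by move=> n; exact: tn_gt.
- exact: tn_cvg.
Qed.
End Approx.
Section DeltaMeas.
Context (R : realType) (d : nat).
Local Notation V := 'rV[R]_d.

Lemma shift_is_path (x : R -> V) (s : R) : 0 <= s -> cadlag x ->
  is_path (fun t => if 0 <= t then x (s + t) - x s else 0).
Proof.
move=> s0 hx; split; last by move=> t t0; rewrite leNgt t0.
move=> t t0; split.
  rewrite t0.
  have h1 : (fun u => x (s + u)) @ t^'+ --> x (s + t).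
    have st : 0 <= s + t by exact: addr_ge0.
    have h := cvg_comp _ _ (@shift_right _ s t) ((hx (s + t) st).1); exact: h.
  have h2 : (fun u => x (s + u) - x s) @ t^'+ --> x (s + t) - x s.
    by apply: cvgB => //; exact: cvg_cst.
  apply: cvg_trans h2; apply: near_eq_cvg.
  near=> u; have ut : t < u by near: u; exact: nbhs_right_gt.
  by rewrite /= (le_trans t0 (ltW ut)).
move=> tpos.
have [l hl] := (hx (s + t) (addr_ge0 s0 (ltW tpos))).2 (ltr_pwDr tpos s0).
exists (l - x s).
have h1 : (fun u => x (s + u)) @ t^'- --> l.
  have h := cvg_comp _ _ (@shift_left _ s t) hl; exact: h.
have h2 : (fun u => x (s + u) - x s) @ t^'- --> l - x s.
  by apply: cvgB => //; exact: cvg_cst.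
apply: cvg_trans h2; apply: near_eq_cvg.
near=> u; have ut : 0 < u.
  near: u; apply/nbhs_left0P; near=> e.
  have : e < t by near: e; exact: nbhs_right_lt.
  by move=> et; rewrite subr_gt0.
by rewrite /= (ltW ut).
Unshelve. all: by end_near.
Qed.
End DeltaMeas.
Section DeltaMeas2.
Context (R : realType) (d : nat) (dO : measure_display) (Omega : measurableType dO).
Local Notation V := 'rV[R]_d.

Lemma sval_shift (x : R -> V) (s : R) : 0 <= s -> cadlag x ->
  sval (shiftpath x s) = (fun t => if 0 <= t then x (s + t) - x s else 0).
Proof.
move=> s0 hx; rewrite /shiftpath insubdK //.
by apply/asboolP; exact: shift_is_path.
Qed.

Lemma fine_meas (S : Omega -> \bar R) : measurable_fun setT S ->
  measurable_fun setT (fun w => fine (S w)).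
Proof. by move=> mS; apply: (measurableT_comp (fine_measurable measurableT) mS). Qed.

Lemma Delta_meas (X : R -> Omega -> V) (S : Omega -> \bar R) :
  (forall t, 0 <= t -> vmeas (X t)) -> (forall w, cadlag (fun t => X t w)) ->
  measurable_fun setT S -> (forall w, (0 <= S w)%E) ->
  forall G : set (Dsp R d), measurable G -> measurable (Delta X S @^-1` G).
Proof.
move=> mX cX mS S0 G mG.
have mt := fine_meas mS.
have t0 w : 0 <= fine (S w) by exact: fine_ge0.
apply: (smallest_sub (X := [set G | measurable (Delta X S @^-1` G)]) _ _ mG) => //.
  split => //=.
  - by rewrite preimage_set0.
  - by move=> A hA; rewrite setTD preimage_setC; exact: measurableC.
  - by move=> F hF; rewrite preimage_bigcup; exact: bigcupT_measurable.
move=> A [t [B [t0' hB ->]]] /=.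
have -> : Delta X S @^-1` [set w | B (sval w t)] =
   (fun w => X (fine (S w) + t) w - X (fine (S w)) w) @^-1` B.
  apply/seteqP; split => w /=; rewrite /Delta sval_shift // t0' //.
apply: vmeasB => //.
  apply: (@vmeas_rt _ _ _ _ (fun u => X (u + t))) => //.
    by move=> u u0; apply: mX; exact: addr_ge0.
  move=> w u u0.
  have h := cvg_comp _ _ (@shift_right _ t u) ((cX w (t + u) (addr_ge0 t0' u0)).1).
  have -> : (fun v => X (v + t) w) = (fun v => X (t + v) w) by apply: funext => v; rewrite addrC.
  by rewrite addrC; exact: h.
apply: (@vmeas_rt _ _ _ _ X) => //.
by move=> w u u0; exact: (cX w u u0).1.
Qed.
End DeltaMeas2.
Section OptMeas.
Context (R : realType) (dO : measure_display) (Omega : measurableType dO).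
Variable F : R -> set (set Omega).
Hypothesis hF : filtration F.

Lemma adapted_meas (Z : R -> Omega -> R) u : adapted_cadlag F Z -> 0 <= u ->
  measurable_fun setT (Z u).
Proof.
case: hF => _ _ hF3 [hZ _] u0 _ B mB; rewrite setTI.
exact: (hF3 u u0 _ (hZ u u0 B mB)).
Qed.

Lemma optional_rt (O : set (Omega * R)) : optional F O ->
  forall tau : Omega -> R, measurable_fun setT tau -> (forall w, 0 <= tau w) ->
  measurable [set w | O (w, tau w)].
Proof.
move=> hO; apply: (smallest_sub (X := [set O | forall tau : Omega -> R, measurable_fun setT tau ->
   (forall w, 0 <= tau w) -> measurable [set w | O (w, tau w)]]) _ _ hO) => //.
  split => /=.
  - by move=> tau _ _; have -> : [set w | @set0 (Omega * R) (w, tau w)] = set0 by apply/seteqP; split.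
  - move=> A hA tau mt t0.
    have -> : [set w | (halfline `\` A) (w, tau w)] = ~` [set w | A (w, tau w)].
      by apply/seteqP; split => w /=; [case|move=> h; split => //; exact: t0].
    exact/measurableC/hA.
  - move=> G hG tau mt t0.
    have -> : [set w | (\bigcup_k G k) (w, tau w)] = \bigcup_k [set w | G k (w, tau w)].
      by apply/seteqP; split => w /= [k _ h]; exists k.
    by apply: bigcupT_measurable => k; exact: hG.
move=> A [Z [B [hZ mB ->]]] tau mt t0 /=.
have mZ := @rmeas_rt _ _ _ Z tau mt t0 (fun u u0 => adapted_meas hZ u0)
  (fun w u u0 => ((hZ.2 w) u u0).1).
have -> : [set w | 0 <= tau w /\ B (Z (tau w) w)] = setT `&` (fun w => Z (tau w) w) @^-1` B.
  by apply/seteqP; split => w /=; [case|move=> [_ h]; split].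
exact: mZ.
Qed.

Lemma optmeas_rt (Z : Omega * R -> R) : optional_meas F Z ->
  forall tau : Omega -> R, measurable_fun setT tau -> (forall w, 0 <= tau w) ->
  measurable_fun setT (fun w => Z (w, tau w)).
Proof.
move=> hZ tau mt t0 _ B mB.
have -> : setT `&` (fun w => Z (w, tau w)) @^-1` B = [set w | [set p | 0 <= p.2 /\ B (Z p)] (w, tau w)].
  by apply/seteqP; split => w /=; [case|move=> [_ h]; split].
exact: optional_rt (hZ B mB) _ mt t0.
Qed.

Lemma fin_meas (S : Omega -> \bar R) : measurable_fun setT S -> measurable (fin S).
Proof.
move=> mS; have -> : fin S = setT `&` S @^-1` (~` [set +oo%E]).
  apply/seteqP; split => w /=.
    by rewrite /fin /= ltey => /eqP h; split.
  by move=> [_ h]; rewrite /fin /= ltey; apply/eqP.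
exact/mS/measurableC/emeasurable_set1.
Qed.

Lemma stopped_meas (S : Omega -> \bar R) : measurable_fun setT S -> (forall w, (0 <= S w)%E) ->
  stopped_field F S `<=` measurable.
Proof.
move=> mS S0; apply: smallest_sub.
  split => //=.
  - by move=> A mA; apply: measurableD => //; exact: fin_meas.
  - by move=> G hG; exact: bigcupT_measurable.
move=> A [Z [B [hZ mB ->]]].
have -> : [set w | (S w < +oo)%E /\ B (Z (w, fine (S w)))] =
   fin S `&` (setT `&` (fun w => Z (w, fine (S w))) @^-1` B).
  by apply/seteqP; split => w /=; [case|move=> [? [_ ?]]].
apply: measurableI; first exact: fin_meas.
apply: (optmeas_rt hZ (fine_meas mS)) => //.
by move=> w; exact: fine_ge0.
Qed.
End OptMeas.
Ltac seteq := apply/seteqP; split => ? /=; tauto.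

Section Indep.
Context (R : realType) (d : nat) (dO : measure_display) (Omega : measurableType dO).
Variable P : probability Omega R.
Local Notation Pr A := (fine (P A)).

Lemma Pr_fin A : measurable A -> P A \is a fin_num.
Proof. by move=> mA; exact: fin_num_measure. Qed.

Lemma Pr_add A B : measurable A -> measurable B -> A `&` B = set0 ->
  Pr (A `|` B) = Pr A + Pr B.
Proof.
move=> mA mB AB; rewrite measureU //; rewrite fineD //; exact: Pr_fin.
Qed.

Lemma Pr_null A N : measurable A -> measurable N -> P N = 0%E -> Pr A = Pr (A `\` N).
Proof.
move=> mA mN PN.
have hA : A = (A `\` N) `|` (A `&` N).
  apply/seteqP; split => w /=; last tauto.
  by move=> Aw; case: (pselect (N w)) => h; [right|left].
have dj : (A `\` N) `&` (A `&` N) = set0 by seteq.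
have m1 : measurable (A `\` N) by apply: measurableD.
have m2 : measurable (A `&` N) by apply: measurableI.
rewrite {1}hA (Pr_add m1 m2 dj).
have h0 : P (A `&` N) = 0%E.
  by apply: (subset_measure0 m2 mN) => // w [].
by rewrite h0 /= addr0.
Qed.

Lemma Pr_gt0 A : measurable A -> (0 < P A)%E -> 0 < Pr A.
Proof.
move=> mA h; apply: fine_gt0; rewrite h /= ltey.
by have := Pr_fin mA; rewrite fin_numE => /andP[].
Qed.

Lemma indep_factor C H (Y : Omega -> Dsp R d) : Pr C != 0 ->
  indep_cond P C H (sigmaD C Y) ->
  forall E G, H E -> measurable G ->
  Pr (E `&` C `&` Y @^-1` G) = Pr (E `&` C) * (Pr (C `&` Y @^-1` G) / Pr C).
Proof.
move=> c0 hI E G hE mG.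
have := hI E (C `&` Y @^-1` G) hE (ex_intro _ G (conj mG erefl)).
rewrite /condP.
have -> : E `&` (C `&` Y @^-1` G) `&` C = E `&` C `&` Y @^-1` G by seteq.
have -> : C `&` Y @^-1` G `&` C = C `&` Y @^-1` G by seteq.
move=> h; rewrite -(divfK c0 (Pr (E `&` C `&` Y @^-1` G))) h; field; rewrite ?c0 ?c0' //=.
Qed.

Lemma indepR_factor C H (f : Omega -> R) : Pr C != 0 ->
  indep_cond P C H (sigmaR C f) ->
  forall E B, H E -> measurable B ->
  Pr (E `&` C `&` f @^-1` B) = Pr (E `&` C) * (Pr (C `&` f @^-1` B) / Pr C).
Proof.
move=> c0 hI E B hE mB.
have := hI E (C `&` f @^-1` B) hE (ex_intro _ B (conj mB erefl)).
rewrite /condP.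
have -> : E `&` (C `&` f @^-1` B) `&` C = E `&` C `&` f @^-1` B by seteq.
have -> : C `&` f @^-1` B `&` C = C `&` f @^-1` B by seteq.
move=> h; rewrite -(divfK c0 (Pr (E `&` C `&` f @^-1` B))) h; field; rewrite ?c0 ?c0' //=.
Qed.

Lemma factor_indep C H (Y : Omega -> Dsp R d) (m : set (Dsp R d) -> R) : Pr C != 0 ->
  H C ->
  (forall E G, H E -> measurable G -> Pr (E `&` C `&` Y @^-1` G) = Pr (E `&` C) * m G) ->
  indep_cond P C H (sigmaD C Y) /\
  (forall G, measurable G -> condP P C (Y @^-1` G) = m G).
Proof.
move=> c0 hC hf.
have law G : measurable G -> Pr (C `&` Y @^-1` G) = Pr C * m G.
  move=> mG; have := hf C G hC mG.
  by rewrite setIid.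
split.
  move=> E B hE [G [mG ->]]; rewrite /condP.
  have -> : E `&` (C `&` Y @^-1` G) `&` C = E `&` C `&` Y @^-1` G by seteq.
  have -> : C `&` Y @^-1` G `&` C = C `&` Y @^-1` G by seteq.
  rewrite hf // law //; field; rewrite ?c0 ?c0' //=.
move=> G mG; rewrite /condP setIC law //; field; rewrite ?c0 ?c0' //=.
Qed.
End Indep.
Section Transfer.
Context (R : realType) (d : nat) (dO : measure_display) (Omega : measurableType dO).
Variable P : probability Omega R.
Local Notation Pr A := (fine (P A)).

Lemma transfer_a C C' H H' (Y Y' : Omega -> Dsp R d) :
  Pr C != 0 -> Pr C' != 0 -> C' `<=` C -> (forall w, C' w -> Y' w = Y w) ->
  H' `<=` H -> (forall E, H' E -> E `<=` C') -> H' C' ->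
  indep_cond P C H (sigmaD C Y) ->
  indep_cond P C' H' (sigmaD C' Y') /\
  (forall G, measurable G -> condP P C' (Y' @^-1` G) = condP P C (Y @^-1` G)).
Proof.
move=> c0 c0' sub hY sH sE top hI.
suff hf : forall E G, H' E -> measurable G ->
    Pr (E `&` C' `&` Y' @^-1` G) = Pr (E `&` C') * (Pr (C `&` Y @^-1` G) / Pr C).
  have [hi hl] := factor_indep c0' top hf.
  split => // G mG; rewrite hl // /condP setIC //.
move=> E G hE mG.
have e1 : E `&` C' `&` Y' @^-1` G = E `&` C `&` Y @^-1` G.
  apply/seteqP; split => w /= [[Ew Cw] Gw].
    by split; [split => //; exact: sub | rewrite -hY].
  have C'w := sE E hE w Ew.
  by split => //; rewrite hY.
have e2 : E `&` C' = E `&` C.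
  apply/seteqP; split => w /= [Ew Cw]; split => //; first exact: sub.
  exact: sE E hE w Ew.
rewrite e1 e2; exact: (indep_factor c0 hI (sH _ hE) mG).
Qed.

Lemma transfer_b C C' H H' (Y Y' : Omega -> Dsp R d) (Ga : set (Dsp R d)) :
  Pr C != 0 -> Pr C' != 0 -> C' = C `&` Y @^-1` Ga -> (forall w, C' w -> Y' w = Y w) ->
  measurable Ga ->
  (forall E', H' E' -> exists E, H E /\ E' = C' `&` E) -> H' C' ->
  indep_cond P C H (sigmaD C Y) ->
  indep_cond P C' H' (sigmaD C' Y') /\
  (forall G, measurable G -> condP P C' (Y' @^-1` G) =
     condP P C (Y @^-1` (G `&` Ga)) / condP P C (Y @^-1` Ga)).
Proof.
move=> c0 c0' eC hY mGa sH top hI.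
have qG0 : Pr (C `&` Y @^-1` Ga) / Pr C != 0 by rewrite -eC mulf_neq0 // invr_eq0.
suff hf : forall E G, H' E -> measurable G ->
    Pr (E `&` C' `&` Y' @^-1` G) = Pr (E `&` C') *
    ((Pr (C `&` Y @^-1` (G `&` Ga)) / Pr C) / (Pr (C `&` Y @^-1` Ga) / Pr C)).
  have [hi hl] := factor_indep c0' top hf.
  by split => // G mG; rewrite hl // /condP (setIC (Y @^-1` (G `&` Ga))) (setIC (Y @^-1` Ga)).
move=> E G hE mG.
have [E0 [hE0 ->]] := sH E hE.
have e1 : C' `&` E0 `&` C' `&` Y' @^-1` G = E0 `&` C `&` Y @^-1` (G `&` Ga).
  rewrite eC; apply/seteqP; split => w /=.
    move=> [[[[Cw Gaw] E0w] _] Gw]; split => //; split => //.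
    by rewrite -hY // eC.
  move=> [[E0w Cw] [Gw Gaw]]; have C'w : C' w by rewrite eC.
  by split; [do !split => // | rewrite hY].
have e2 : C' `&` E0 `&` C' = E0 `&` C `&` Y @^-1` Ga.
  rewrite eC; seteq.
rewrite e1 e2 (indep_factor c0 hI hE0 (measurableI _ _ mG mGa)).
have q0 : Pr (C `&` Y @^-1` Ga) != 0 by rewrite -eC.
rewrite (indep_factor c0 hI hE0 mGa); field; by rewrite c0 q0.
Qed.
End Transfer.
Section Main.
Context (R : realType) (d : nat) (dO : measure_display) (Omega : measurableType dO).
Variable P : probability Omega R.
Variable F : R -> set (set Omega).
Hypothesis hF : filtration F.
Local Notation Pr A := (fine (P A)).

Lemma sf_sa S : sigma_algebra (fin S) (stopped_field F S).
Proof. exact: smallest_sigma_algebra. Qed.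

Lemma sf_sub S E : stopped_field F S E -> E `<=` fin S.
Proof. by apply: sa_sub => A [Z [B [_ _ ->]]] w []. Qed.

Lemma sf_top S : stopped_field F S (fin S).
Proof. exact: sa_top (sf_sa S). Qed.

Lemma sf_gen S Z B : optional_meas F Z -> measurable B ->
  stopped_field F S [set w | (S w < +oo)%E /\ B (Z (w, fine (S w)))].
Proof. by move=> hZ mB; apply: smallest_gen; exists Z, B. Qed.

Lemma opt_sa : sigma_algebra halfline (optional F).
Proof. exact: smallest_sigma_algebra. Qed.

Lemma opt_sub A : optional F A -> A `<=` halfline.
Proof. by apply: sa_sub => B [Z [C [_ _ ->]]] p []. Qed.

Lemma finK (S : Omega -> \bar R) w : (0 <= S w)%E -> fin S w -> S w = (fine (S w))%:E.
Proof. by move=> S0 fS; rewrite fineK // ge0_fin_numE. Qed.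

Definition ind (A : set (Omega * R)) (p : Omega * R) : R := if pselect (A p) then 1 else 0.

Lemma ind_optmeas A : optional F A -> optional_meas F (ind A).
Proof.
move=> hA B mB.
have sA := opt_sub hA.
have [sa0 saC saU] := opt_sa.
case: (pselect (B 1)) => B1; case: (pselect (B 0)) => B0.
- have -> : [set p | 0 <= p.2 /\ B (ind A p)] = halfline.
    apply/seteqP; split => p /=; first by case.
    by move=> h; split => //; rewrite /ind; case: pselect.
  exact: sa_top opt_sa.
- have -> : [set p | 0 <= p.2 /\ B (ind A p)] = A.
    apply/seteqP; split => p /=.
      by move=> [_]; rewrite /ind; case: pselect.
    by move=> Ap; split; [exact: sA | rewrite /ind; case: pselect].
  exact: hA.
- have -> : [set p | 0 <= p.2 /\ B (ind A p)] = halfline `\` A.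
    apply/seteqP; split => p /=.
      by move=> [p0]; rewrite /ind; case: pselect.
    by move=> [p0 nA]; split => //; rewrite /ind; case: pselect.
  exact: saC.
- have -> : [set p | 0 <= p.2 /\ B (ind A p)] = set0.
    apply/seteqP; split => p //=.
    by move=> [_]; rewrite /ind; case: pselect.
  exact: sa0.
Qed.

Variable X : R -> Omega -> 'rV[R]_d.

Lemma partIa (Rt Pt : Omega -> \bar R) (A : set (Omega * R)) :
  (forall w, (0 <= Rt w)%E) -> measurable_fun setT Rt -> (0 < P (fin Rt))%E ->
  (forall w, (0 <= Pt w)%E) -> measurable_fun setT Pt -> (0 < P (fin Pt))%E ->
  optional F A -> graph Pt = A `&` graph Rt ->
  indep_cond P (fin Rt) (stopped_field F Rt) (sigmaD (fin Rt) (Delta X Rt)) ->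
  indep_cond P (fin Pt) (stopped_field F Pt) (sigmaD (fin Pt) (Delta X Pt)) /\
  (forall G : set (Dsp R d), measurable G ->
     condP P (fin Pt) (Delta X Pt @^-1` G) = condP P (fin Rt) (Delta X Rt @^-1` G)).
Proof.
move=> R0 mR PR P0 mP PP hA hg hI.
have hg' w t : Pt w = t%:E <-> A (w, t) /\ Rt w = t%:E.
  by move: (f_equal (fun S => S (w, t)) hg); rewrite /graph /= => ->.
have fa1 w : fin Pt w <-> fin Rt w /\ A (w, fine (Rt w)).
  split.
    move=> fP; have /hg' [Aw Rw] := finK (P0 w) fP.
    by split; [rewrite /fin /= Rw ltry | rewrite Rw].
  move=> [fR Aw]; have Rw := finK (R0 w) fR.
  have e : Pt w = (fine (Rt w))%:E by apply/hg'.
  by rewrite /fin /= e ltry.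
have fa2 w : fin Pt w -> Pt w = Rt w.
  move=> fP; have /hg' [_ Rw] := finK (P0 w) fP.
  by rewrite Rw -finK.
have eY w : fin Pt w -> Delta X Pt w = Delta X Rt w by move=> h; rewrite /Delta (fa2 w h).
have sub : fin Pt `<=` fin Rt by move=> w /fa1 [].
have fPin : stopped_field F Rt (fin Pt).
  have -> : fin Pt = [set w | (Rt w < +oo)%E /\ [set 1] (ind A (w, fine (Rt w)))].
    apply/seteqP; split => w.
      by move/fa1 => [fR Aw]; split => //; rewrite /ind; case: pselect.
    move=> [fR]; rewrite /ind; case: pselect => Aw /= h.
      by apply/fa1; split.
    by move/eqP: h; rewrite eq_sym oner_eq0.
  exact: sf_gen (ind_optmeas hA) (measurable_set1 1).
have incl : stopped_field F Pt `<=` stopped_field F Rt.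
  have [s0 sC sU] := sf_sa Rt.
  suff : stopped_field F Pt `<=` [set E | stopped_field F Rt E /\ E `<=` fin Pt].
    by move=> h E /h [].
  apply: smallest_sub.
    split.
    - by split => //; exact: sub0set.
    - move=> E [hE sE]; split; last by move=> w [].
      have -> : fin Pt `\` E = fin Rt `\` ((fin Rt `\` fin Pt) `|` E).
        apply/seteqP; split => w /=.
          by move=> [fP nE]; split; [exact: sub | move=> [[_ /(_ fP)] | /nE]].
        move=> [fR h]; split; first by apply: contrapT => nP; apply: h; left.
        by move=> Ew; apply: h; right.
      by apply: (sC); apply: (sa_U (sf_sa Rt)); [apply: (sC); exact: fPin | exact: hE].
    - move=> G hG; split; first exact: sU (fun n => (hG n).1).
      by move=> w [n _ /(hG n).2].
  move=> E [Z [B [hZ mB ->]]]; split; last by move=> w [].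
  have -> : [set w | (Pt w < +oo)%E /\ B (Z (w, fine (Pt w)))] =
      fin Pt `&` [set w | (Rt w < +oo)%E /\ B (Z (w, fine (Rt w)))].
    apply/seteqP; split => w /=.
      move=> [fP hB]; split => //; split; first exact: sub.
      by rewrite -(fa2 w fP).
    by move=> [fP [fR hB]]; split => //; rewrite (fa2 w fP).
  by apply: (sa_I (sf_sa Rt) sub _ fPin (sf_gen hZ mB)) => w [].
have c0 : Pr (fin Rt) != 0 by rewrite gt_eqF // Pr_gt0 //; exact: fin_meas.
have c0' : Pr (fin Pt) != 0 by rewrite gt_eqF // Pr_gt0 //; exact: fin_meas.
exact: (transfer_a c0 c0' sub eY incl (fun E hE => sf_sub hE) (sf_top (S := Pt)) hI).
Qed.

Lemma partIb (Rt Pt : Omega -> \bar R) (Ga : set (Dsp R d)) :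
  (forall w, (0 <= Rt w)%E) -> measurable_fun setT Rt -> (0 < P (fin Rt))%E ->
  (forall w, (0 <= Pt w)%E) -> measurable_fun setT Pt -> (0 < P (fin Pt))%E ->
  measurable Ga -> graph Pt = btpre X Ga `&` graph Rt ->
  indep_cond P (fin Rt) (stopped_field F Rt) (sigmaD (fin Rt) (Delta X Rt)) ->
  indep_cond P (fin Pt) (stopped_field F Pt) (sigmaD (fin Pt) (Delta X Pt)) /\
  (forall G : set (Dsp R d), measurable G ->
     condP P (fin Pt) (Delta X Pt @^-1` G) =
     condP P (fin Rt) (Delta X Rt @^-1` (G `&` Ga)) /
     condP P (fin Rt) (Delta X Rt @^-1` Ga)).
Proof.
move=> R0 mR PR P0 mP PP mGa hg hI.
have hg' w t : Pt w = t%:E <-> (0 <= t /\ Ga (shiftpath (fun s => X s w) t)) /\ Rt w = t%:E.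
  by move: (f_equal (fun S => S (w, t)) hg); rewrite /graph /= => ->.
have fb1 : fin Pt = fin Rt `&` Delta X Rt @^-1` Ga.
  apply/seteqP; split => w /=.
    move=> fP; have /hg' [[_ Gw] Rw] := finK (P0 w) fP.
    by split; [rewrite /fin /= Rw ltry | rewrite /Delta Rw].
  move=> [fR hG]; have Rw := finK (R0 w) fR.
  have e : Pt w = (fine (Rt w))%:E by apply/hg'; split => //; split => //; exact: fine_ge0.
  by rewrite /fin /= e ltry.
have fa2 w : fin Pt w -> Pt w = Rt w.
  move=> fP; have /hg' [_ Rw] := finK (P0 w) fP.
  by rewrite Rw -finK.
have eY w : fin Pt w -> Delta X Pt w = Delta X Rt w by move=> h; rewrite /Delta (fa2 w h).
have sub : fin Pt `<=` fin Rt by rewrite fb1 => w [].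
have [s0 sC sU] := sf_sa Rt.
have incl : forall E', stopped_field F Pt E' -> exists E, stopped_field F Rt E /\ E' = fin Pt `&` E.
  suff : stopped_field F Pt `<=` [set E' | exists E, stopped_field F Rt E /\ E' = fin Pt `&` E] by [].
  apply: smallest_sub.
    split.
    - by exists set0; split; [exact: s0 | rewrite setI0].
    - move=> E' [E [hE ->]]; exists (fin Rt `\` E); split; first exact: sC.
      apply/seteqP; split => w /=.
        by move=> [fP h]; split => //; split; [exact: sub | move=> Ew; apply: h].
      by move=> [fP [_ nE]]; split => // -[].
    - move=> G hG; have [f hf] := choice hG.
      exists (\bigcup_n f n); split; first exact: sU (fun n => (hf n).1).
      rewrite setI_bigcupr; apply/seteqP; split => w [n _ h]; exists n => //.
        by rewrite -(hf n).2.
      by rewrite (hf n).2.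
  move=> E [Z [B [hZ mB ->]]].
  exists [set w | (Rt w < +oo)%E /\ B (Z (w, fine (Rt w)))]; split; first exact: (sf_gen hZ mB).
  apply/seteqP; split => w /=.
    move=> [fP hB]; split => //; split; first exact: sub.
    by rewrite -(fa2 w fP).
  by move=> [fP [fR hB]]; split => //; rewrite (fa2 w fP).
have c0 : Pr (fin Rt) != 0 by rewrite gt_eqF // Pr_gt0 //; exact: fin_meas.
have c0' : Pr (fin Pt) != 0 by rewrite gt_eqF // Pr_gt0 //; exact: fin_meas.
exact: (transfer_b c0 c0' fb1 eY mGa incl (sf_top (S := Pt)) hI).
Qed.

Hypothesis hX : levy P F X.

Lemma mDelta (S : Omega -> \bar R) : measurable_fun setT S -> (forall w, (0 <= S w)%E) ->
  forall G, measurable G -> measurable (Delta X S @^-1` G).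
Proof.
move=> mS S0; case: hX => hX1 hX2 _ _ _; case: hF => _ _ hF3.
apply: Delta_meas => // t t0 B hB; exact: (hF3 t t0 _ (hX1 t t0 B hB)).
Qed.

Lemma trace_sf (S S' : Omega -> \bar R) : fin S' `<=` fin S -> (forall w, fin S' w -> S' w = S w) ->
  forall E, stopped_field F S E -> stopped_field F S' (E `&` fin S').
Proof.
move=> sub eS.
have [s0 sC sU] := sf_sa S'.
suff : stopped_field F S `<=` [set E | stopped_field F S' (E `&` fin S')] by [].
apply: smallest_sub.
  split.
  - by rewrite /= set0I.
  - move=> E hE /=.
    have -> : (fin S `\` E) `&` fin S' = fin S' `\` (E `&` fin S').
      apply/seteqP; split => w /=; first by move=> [[_ nE] fS]; split => // -[].
      by move=> [fS h]; split => //; split; [exact: sub | move=> Ew; apply: h].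
    exact: sC.
  - by move=> G hG /=; rewrite setI_bigcupl; exact: sU.
move=> E [Z [B [hZ mB ->]]] /=.
have -> : [set w | (S w < +oo)%E /\ B (Z (w, fine (S w)))] `&` fin S' =
    [set w | (S' w < +oo)%E /\ B (Z (w, fine (S' w)))].
  apply/seteqP; split => w /=.
    by move=> [[_ hB] fS]; split => //; rewrite (eS w fS).
  by move=> [fS hB]; split => //; split; [exact: sub | rewrite -(eS w fS)].
exact: (sf_gen hZ mB).
Qed.

Lemma indic1 (T : Type) (A : set T) x : (\1_A x = 1 :> R) <-> A x.
Proof.
rewrite indicE; case: (pselect (A x)) => h; first by rewrite mem_set.
by rewrite memNset //; split => // /eqP; rewrite eq_sym oner_eq0.
Qed.

Lemma indic0 (T : Type) (A : set T) x : (\1_A x = 0 :> R) <-> ~ A x.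
Proof.
rewrite indicE; case: (pselect (A x)) => h; last by rewrite memNset.
by rewrite mem_set //; split => // /eqP; rewrite oner_eq0.
Qed.

Lemma partIIii (Rt R1 R2 : Omega -> \bar R) (Ga : set (Dsp R d)) (M : probability (Dsp R d) R) :
  (forall w, (0 <= Rt w)%E) -> measurable_fun setT Rt -> (0 < P (fin Rt))%E ->
  (forall w, (0 <= R1 w)%E) -> measurable_fun setT R1 -> (0 < P (fin R1))%E ->
  (forall w, (0 <= R2 w)%E) -> measurable_fun setT R2 -> (0 < P (fin R2))%E ->
  indep_cond P (fin R1) (stopped_field F R1) (sigmaD (fin R1) (Delta X R1)) ->
  indep_cond P (fin R2) (stopped_field F R2) (sigmaD (fin R2) (Delta X R2)) ->
  measurable Ga ->
  graph R1 = graph Rt `&` btpre X Ga ->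
  graph R2 = graph Rt `&` btpre X (~` Ga) ->
  indep_cond P (fin Rt) (stopped_field F Rt)
    (sigmaR (fin Rt) (fun w => (\1_Ga (Delta X Rt w) : R))) ->
  condP P (fin Rt) (Delta X Rt @^-1` Ga) = fine (M Ga) ->
  (forall G : set (Dsp R d), measurable G ->
     condP P (fin R1) (Delta X R1 @^-1` G) =
     fine (M (G `&` Ga)) / fine (M Ga)) ->
  (forall G : set (Dsp R d), measurable G ->
     condP P (fin R2) (Delta X R2 @^-1` G) =
     fine (M (G `&` ~` Ga)) / fine (M (~` Ga))) ->
  indep_cond P (fin Rt) (stopped_field F Rt) (sigmaD (fin Rt) (Delta X Rt)) /\
  (forall G : set (Dsp R d), measurable G ->
     condP P (fin Rt) (Delta X Rt @^-1` G) = fine (M G)).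
Proof.
move=> R0 mR PR R10 mR1 PR1 R20 mR2 PR2 hI1 hI2 mGa g1 g2 hIR hG law1 law2.
have desc (Ri : Omega -> \bar R) (Gi : set (Dsp R d)) :
    (forall w, (0 <= Ri w)%E) -> graph Ri = graph Rt `&` btpre X Gi ->
    fin Ri = (fin Rt) `&` (Delta X Rt) @^-1` Gi /\ (forall w, fin Ri w -> Ri w = Rt w).
  move=> Ri0 gi.
  have hg' w t : Ri w = t%:E <-> Rt w = t%:E /\ (0 <= t /\ Gi (shiftpath (fun s => X s w) t)).
    by move: (f_equal (fun S => S (w, t)) gi); rewrite /graph /= => ->.
  split.
    apply/seteqP; split => w /=.
      move=> fP; have /hg' [Rw [_ Gw]] := finK (Ri0 w) fP.
      by split; [rewrite /fin /= Rw ltry | rewrite /Delta Rw].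
    move=> [fR hGi]; have Rw := finK (R0 w) fR.
    have e : Ri w = (fine (Rt w))%:E by apply/hg'; split => //; split => //; exact: fine_ge0.
    by rewrite /fin /= e ltry.
  move=> w fP; have /hg' [Rw _] := finK (Ri0 w) fP.
  by rewrite Rw -finK.
have [f1 e1] := desc R1 Ga R10 g1.
have [f2 e2] := desc R2 (~` Ga) R20 g2.
have mC : measurable (fin Rt) by exact: fin_meas.
have mY G : measurable G -> measurable ((Delta X Rt) @^-1` G) by move=> mG; exact: mDelta.
have mE E : stopped_field F Rt E -> measurable E by move=> hE; exact: (stopped_meas hF mR R0).
have c0 : Pr (fin Rt) != 0 by rewrite gt_eqF // Pr_gt0.
have c10 : Pr (fin R1) != 0 by rewrite gt_eqF // Pr_gt0 //; exact: fin_meas.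
have c20 : Pr (fin R2) != 0 by rewrite gt_eqF // Pr_gt0 //; exact: fin_meas.
pose m G := fine (M G).
have mGc : measurable (~` Ga) by exact: measurableC.
have qG : Pr ((fin Rt) `&` (Delta X Rt) @^-1` Ga) / Pr (fin Rt) = m Ga by rewrite /m -hG /condP setIC.
have qGc : Pr ((fin Rt) `&` (Delta X Rt) @^-1` (~` Ga)) / Pr (fin Rt) = m (~` Ga).
  have hC : (fin Rt) = ((fin Rt) `&` (Delta X Rt) @^-1` Ga) `|` ((fin Rt) `&` (Delta X Rt) @^-1` (~` Ga)).
    apply/seteqP; split => w /=; last tauto.
    by move=> Cw; case: (pselect (Ga ((Delta X Rt) w))) => h; [left|right].
  have dj : ((fin Rt) `&` (Delta X Rt) @^-1` Ga) `&` ((fin Rt) `&` (Delta X Rt) @^-1` (~` Ga)) = set0 by seteq.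
  have PC : Pr (fin Rt) = Pr ((fin Rt) `&` (Delta X Rt) @^-1` Ga) + Pr ((fin Rt) `&` (Delta X Rt) @^-1` (~` Ga)).
    by rewrite {1}hC Pr_add //; apply: measurableI => //; exact: mY.
  have MC : m (~` Ga) = 1 - m Ga.
    rewrite /m probability_setC // fineB //; exact: Pr_fin.
  rewrite MC -qG; move: PC; set a := Pr ((fin Rt) `&` _); set b := Pr ((fin Rt) `&` _) => PC.
  rewrite PC; field.
  by rewrite -PC.
have mG0 : m Ga != 0 by rewrite -qG -f1 mulf_neq0 // invr_eq0.
have mGc0 : m (~` Ga) != 0 by rewrite -qGc -f2 mulf_neq0 // invr_eq0.
have ef1 : (fin Rt) `&` (fun w => (\1_Ga (Delta X Rt w) : R)) @^-1` [set 1] = (fin Rt) `&` (Delta X Rt) @^-1` Ga.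
  by apply/seteqP; split => w /= [Cw h]; split => //; move: h; move=> /indic1 ? //; apply/indic1.
have ef0 : (fin Rt) `&` (fun w => (\1_Ga (Delta X Rt w) : R)) @^-1` [set 0] = (fin Rt) `&` (Delta X Rt) @^-1` (~` Ga).
  by apply/seteqP; split => w /= [Cw h]; split => //; move: h; move=> /indic0 ? //; apply/indic0.
have key1 E : stopped_field F Rt E -> Pr (E `&` fin R1) = Pr (E `&` (fin Rt)) * m Ga.
  move=> hE; have := indepR_factor c0 hIR hE (measurable_set1 1).
  have -> : E `&` fin Rt `&` (fun w => (\1_Ga (Delta X Rt w) : R)) @^-1` [set 1] = E `&` fin R1.
    by rewrite f1 -setIA ef1.
  by rewrite ef1 qG.
have key2 E : stopped_field F Rt E -> Pr (E `&` fin R2) = Pr (E `&` (fin Rt)) * m (~` Ga).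
  move=> hE; have := indepR_factor c0 hIR hE (measurable_set1 0).
  have -> : E `&` fin Rt `&` (fun w => (\1_Ga (Delta X Rt w) : R)) @^-1` [set 0] = E `&` fin R2.
    by rewrite f2 -setIA ef0.
  by rewrite ef0 qGc.
have s1 : fin R1 `<=` fin Rt by rewrite f1 => w [].
have s2 : fin R2 `<=` fin Rt by rewrite f2 => w [].
have main E G : stopped_field F Rt E -> measurable G ->
    Pr (E `&` (fin Rt) `&` (Delta X Rt) @^-1` G) = Pr (E `&` (fin Rt)) * m G.
  move=> hE mG.
  pose A1 := E `&` fin R1 `&` fin R1 `&` Delta X R1 @^-1` G.
  pose A2 := E `&` fin R2 `&` fin R2 `&` Delta X R2 @^-1` G.
  have eA : E `&` (fin Rt) `&` (Delta X Rt) @^-1` G = A1 `|` A2.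
    apply/seteqP; split => w /=.
      move=> [[Ew Cw] Gw]; case: (pselect (Ga ((Delta X Rt) w))) => h.
        have C1w : fin R1 w by rewrite f1.
        by left; rewrite /A1 /= /Delta (e1 w C1w); do !split.
      have C2w : fin R2 w by rewrite f2.
      by right; rewrite /A2 /= /Delta (e2 w C2w); do !split.
    move=> [|]; rewrite /A1 /A2 /= => -[[[Ew Ciw] _] Gw].
      by do !split => //; [exact: s1 | move: Gw; rewrite /Delta (e1 w Ciw)].
    by do !split => //; [exact: s2 | move: Gw; rewrite /Delta (e2 w Ciw)].
  have dj : A1 `&` A2 = set0.
    apply/seteqP; split => w //=; rewrite /A1 /A2 /= => -[[[[_ w1] _] _] [[[_ w2] _] _]].
    by move: w1 w2; rewrite f1 f2 => -[_ ?] [_ ?].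
  have mA1 : measurable A1.
    apply: measurableI; last exact: mDelta.
    apply: measurableI; last exact: fin_meas.
    by apply: measurableI; [exact: mE | exact: fin_meas].
  have mA2 : measurable A2.
    apply: measurableI; last exact: mDelta.
    apply: measurableI; last exact: fin_meas.
    by apply: measurableI; [exact: mE | exact: fin_meas].
  rewrite eA Pr_add //.
  rewrite /A1 (indep_factor c10 hI1 (trace_sf s1 e1 hE) mG).
  rewrite /A2 (indep_factor c20 hI2 (trace_sf s2 e2 hE) mG).
  have h11 : E `&` fin R1 `&` fin R1 = E `&` fin R1 by rewrite -setIA setIid.
  have h22 : E `&` fin R2 `&` fin R2 = E `&` fin R2 by rewrite -setIA setIid.
  rewrite h11 h22 key1 // key2 //.
  rewrite (setIC (fin R1)) (setIC (fin R2)).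
  have := law1 G mG; rewrite /condP => ->.
  have := law2 G mG; rewrite /condP => ->.
  have MG : m G = m (G `&` Ga) + m (G `&` ~` Ga).
    rewrite /m -Pr_add; [|exact: measurableI|exact: measurableI|seteq].
    congr (fine (M _)); apply/seteqP; split => x /=; last tauto.
    by move=> Gx; case: (pselect (Ga x)) => h; [left|right].
  rewrite MG /m; move: mG0 mGc0; rewrite /m => h1 h2; field; by rewrite h1 h2.
have [hi hl] := factor_indep c0 (sf_top (S := Rt)) main.
by split.
Qed.

Lemma set_iff (T : Type) (A B : set T) : A = B -> forall w, A w <-> B w.
Proof. by move=> ->. Qed.

Lemma trace_null (S S' : Omega -> \bar R) (N : set Omega) :
  (forall w, ~ N w -> fin S' w -> fin S w /\ S' w = S w) ->
  forall E, stopped_field F S E ->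
  exists E', stopped_field F S' E' /\ E `&` fin S' `\` N = E' `\` N.
Proof.
move=> hN.
have [s0 sC sU] := sf_sa S'.
suff : stopped_field F S `<=`
   [set E | exists E', stopped_field F S' E' /\ E `&` fin S' `\` N = E' `\` N] by [].
apply: smallest_sub.
  split.
  - by exists set0; split => //; rewrite set0I.
  - move=> E [E' [hE' eE]]; exists (fin S' `\` E'); split; first exact: sC.
    have pE := set_iff eE.
    apply/seteqP; split => w /=.
      move=> [[[fS nE] fS'] nN]; split => //; split => // E'w.
      by apply: nE; have /= := (pE w).2 (conj E'w nN); case => -[].
    move=> [[fS' nE'] nN]; split => //; split => //; split; first exact: (hN w nN fS').1.
    by move=> Ew; apply: nE'; have /= := (pE w).1 (conj (conj Ew fS') nN); case.
  - move=> G hG; have [f hf] := choice hG.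
    exists (\bigcup_n f n); split; first exact: sU (fun n => (hf n).1).
    apply/seteqP; split => w /=.
      move=> [[[n _ Gw] fS'] nN]; split => //; exists n => //.
      by have /= := (set_iff (hf n).2 w).1 (conj (conj Gw fS') nN); case.
    move=> [[n _ fw] nN]; have /= := (set_iff (hf n).2 w).2 (conj fw nN).
    by case => -[Gw fS'] _; split => //; split => //; exists n.
move=> E [Z [B [hZ mB ->]]].
exists [set w | (S' w < +oo)%E /\ B (Z (w, fine (S' w)))]; split; first exact: (sf_gen hZ mB).
apply/seteqP; split => w /=.
  move=> [[[_ hB] fS'] nN]; split => //; split => //.
  by rewrite (hN w nN fS').2.
move=> [[fS' hB] nN]; have [fS e] := hN w nN fS'; split => //; split => //; split => //.
by rewrite -e.
Qed.

Lemma partIIi (Rt R1 R2 : Omega -> \bar R) (A : set (Omega * R)) :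
  (forall w, (0 <= Rt w)%E) -> measurable_fun setT Rt -> (0 < P (fin Rt))%E ->
  (forall w, (0 <= R1 w)%E) -> measurable_fun setT R1 -> (0 < P (fin R1))%E ->
  (forall w, (0 <= R2 w)%E) -> measurable_fun setT R2 -> (0 < P (fin R2))%E ->
  indep_cond P (fin R1) (stopped_field F R1) (sigmaD (fin R1) (Delta X R1)) ->
  indep_cond P (fin R2) (stopped_field F R2) (sigmaD (fin R2) (Delta X R2)) ->
  optional F A ->
  eq_evan P (graph R1) (graph Rt `&` A) ->
  eq_evan P (graph R2) (graph Rt `&` (halfline `\` A)) ->
  (forall G : set (Dsp R d), measurable G ->
     condP P (fin R1) (Delta X R1 @^-1` G) =
     condP P (fin R2) (Delta X R2 @^-1` G)) ->
  indep_cond P (fin Rt) (stopped_field F Rt) (sigmaD (fin Rt) (Delta X Rt)) /\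
  (forall G : set (Dsp R d), measurable G ->
     condP P (fin Rt) (Delta X Rt @^-1` G) =
     condP P (fin R1) (Delta X R1 @^-1` G)).
Proof.
move=> R0 mR PR R10 mR1 PR1 R20 mR2 PR2 hI1 hI2 hA [N1 [mN1 PN1 sN1]] [N2 [mN2 PN2 sN2]] lawE.
pose N := N1 `|` N2.
have mN : measurable N by exact: measurableU.
have PN : P N = 0%E by rewrite /N measureU0 //.
have ev1 w t : ~ N w -> (R1 w = t%:E <-> Rt w = t%:E /\ A (w, t)).
  move=> nN; split => h; apply: contrapT => nh; apply: nN; left; apply: sN1; exists t.
    by left; split.
  by right; split.
have ev2 w t : ~ N w -> (R2 w = t%:E <-> Rt w = t%:E /\ (0 <= t /\ ~ A (w, t))).
  move=> nN; split => h; apply: contrapT => nh; apply: nN; right; apply: sN2; exists t.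
    by left; split.
  by right; split.
have d1 w : ~ N w -> fin R1 w -> fin Rt w /\ R1 w = Rt w.
  move=> nN fw; have /(ev1 w _ nN) [Rw _] := finK (R10 w) fw.
  by split; [rewrite /fin /= Rw ltry | rewrite Rw -finK].
have d2 w : ~ N w -> fin R2 w -> fin Rt w /\ R2 w = Rt w.
  move=> nN fw; have /(ev2 w _ nN) [Rw _] := finK (R20 w) fw.
  by split; [rewrite /fin /= Rw ltry | rewrite Rw -finK].
have d1' w : ~ N w -> fin Rt w -> A (w, fine (Rt w)) -> fin R1 w.
  move=> nN fw Aw; have Rw := finK (R0 w) fw.
  have e : R1 w = (fine (Rt w))%:E by apply/(ev1 w _ nN).
  by rewrite /fin /= e ltry.
have d2' w : ~ N w -> fin Rt w -> ~ A (w, fine (Rt w)) -> fin R2 w.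
  move=> nN fw Aw; have Rw := finK (R0 w) fw.
  have e : R2 w = (fine (Rt w))%:E.
    by apply/(ev2 w _ nN); split => //; split => //; exact: fine_ge0.
  by rewrite /fin /= e ltry.
have d12 w : ~ N w -> fin R1 w -> fin R2 w -> False.
  move=> nN f1 f2.
  have /(ev1 w _ nN) [Rw1 Aw] := finK (R10 w) f1.
  have /(ev2 w _ nN) [Rw2 [_ nAw]] := finK (R20 w) f2.
  move: Rw1 Rw2 => -> [] e; apply: nAw; by rewrite -e.
have c0 : Pr (fin Rt) != 0 by rewrite gt_eqF // Pr_gt0 //; exact: fin_meas.
have c10 : Pr (fin R1) != 0 by rewrite gt_eqF // Pr_gt0 //; exact: fin_meas.
have c20 : Pr (fin R2) != 0 by rewrite gt_eqF // Pr_gt0 //; exact: fin_meas.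
have mE E : stopped_field F Rt E -> measurable E by move=> hE; exact: (stopped_meas hF mR R0).
have mE1 E : stopped_field F R1 E -> measurable E by move=> hE; exact: (stopped_meas hF mR1 R10).
have mE2 E : stopped_field F R2 E -> measurable E by move=> hE; exact: (stopped_meas hF mR2 R20).
pose m G := condP P (fin R1) (Delta X R1 @^-1` G).
have main E G : stopped_field F Rt E -> measurable G ->
    Pr (E `&` fin Rt `&` Delta X Rt @^-1` G) = Pr (E `&` fin Rt) * m G.
  move=> hE mG.
  have [E1 [hE1 eE1]] := trace_null (S := Rt) (S' := R1) (N := N) d1 hE.
  have [E2 [hE2 eE2]] := trace_null (S := Rt) (S' := R2) (N := N) d2 hE.
  have p1 := set_iff eE1; have p2 := set_iff eE2.
  have sE1 := sf_sub hE1; have sE2 := sf_sub hE2.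
  pose A1 := E1 `&` fin R1 `&` Delta X R1 @^-1` G.
  pose A2 := E2 `&` fin R2 `&` Delta X R2 @^-1` G.
  have mA1 : measurable A1.
    apply: measurableI; last exact: mDelta.
    by apply: measurableI; [exact: mE1 | exact: fin_meas].
  have mA2 : measurable A2.
    apply: measurableI; last exact: mDelta.
    by apply: measurableI; [exact: mE2 | exact: fin_meas].
  have mEC : measurable (E `&` fin Rt `&` Delta X Rt @^-1` G).
    apply: measurableI; last exact: mDelta.
    by apply: measurableI; [exact: mE | exact: fin_meas].
  have eA : E `&` fin Rt `&` Delta X Rt @^-1` G `\` N = (A1 `\` N) `|` (A2 `\` N).
    apply/seteqP; split => w /=.
      move=> [[[Ew fw] Gw] nN]; case: (pselect (A (w, fine (Rt w)))) => h.
        have f1w := d1' w nN fw h.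
        have /= [E1w _] := (p1 w).1 (conj (conj Ew f1w) nN).
        by left; rewrite /A1 /= /Delta (d1 w nN f1w).2; do !split.
      have f2w := d2' w nN fw h.
      have /= [E2w _] := (p2 w).1 (conj (conj Ew f2w) nN).
      by right; rewrite /A2 /= /Delta (d2 w nN f2w).2; do !split.
    move=> [|]; rewrite /A1 /A2 /= => -[[[Eiw fiw] Gw] nN].
      have /= [[Ew _] _] := (p1 w).2 (conj Eiw nN).
      have [fw e] := d1 w nN fiw.
      by do !split => //; move: Gw; rewrite /Delta e.
    have /= [[Ew _] _] := (p2 w).2 (conj Eiw nN).
    have [fw e] := d2 w nN fiw.
    by do !split => //; move: Gw; rewrite /Delta e.
  have dj : (A1 `\` N) `&` (A2 `\` N) = set0.
    apply/seteqP; split => w //=; rewrite /A1 /A2 /= => -[[[[_ f1] _] nN] [[[_ f2] _] _]].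
    exact: (d12 w nN f1 f2).
  have eB : E `&` fin Rt `\` N = (E `&` fin R1 `\` N) `|` (E `&` fin R2 `\` N).
    apply/seteqP; split => w /=.
      move=> [[Ew fw] nN]; case: (pselect (A (w, fine (Rt w)))) => h.
        by left; split => //; split => //; exact: d1'.
      by right; split => //; split => //; exact: d2'.
    by move=> [|] [[Ew fiw] nN]; split => //; split => //; [exact: (d1 w nN fiw).1 | exact: (d2 w nN fiw).1].
  have djB : (E `&` fin R1 `\` N) `&` (E `&` fin R2 `\` N) = set0.
    apply/seteqP; split => w //= -[[[_ f1] nN] [[_ f2] _]]; exact: (d12 w nN f1 f2).
  have mD (B : set Omega) : measurable B -> measurable (B `\` N) by move=> mB; exact: measurableD.
  have mEi (S : Omega -> \bar R) : measurable_fun setT S -> measurable (E `&` fin S).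
    by move=> mS; apply: measurableI; [exact: mE | exact: fin_meas].
  rewrite (Pr_null mEC mN PN) eA (Pr_add P (mD _ mA1) (mD _ mA2) dj).
  rewrite -(Pr_null mA1 mN PN) -(Pr_null mA2 mN PN).
  rewrite /A1 /A2 (indep_factor c10 hI1 hE1 mG) (indep_factor c20 hI2 hE2 mG).
  have q1 : Pr (fin R1 `&` Delta X R1 @^-1` G) / Pr (fin R1) = m G by rewrite /m /condP setIC.
  have q2 : Pr (fin R2 `&` Delta X R2 @^-1` G) / Pr (fin R2) = m G by rewrite /m lawE // /condP setIC.
  rewrite q1 q2 -mulrDl.
  have -> : E1 `&` fin R1 = E1 by apply/seteqP; split => w; [case|move=> h; split => //; exact: sE1].
  have -> : E2 `&` fin R2 = E2 by apply/seteqP; split => w; [case|move=> h; split => //; exact: sE2].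
  have mE1' := mE1 _ hE1; have mE2' := mE2 _ hE2.
  rewrite (Pr_null mE1' mN PN) (Pr_null mE2' mN PN) -eE1 -eE2.
  rewrite -(Pr_add P (mD _ (mEi _ mR1)) (mD _ (mEi _ mR2)) djB) -eB.
  by rewrite -(Pr_null (mEi _ mR) mN PN).
have [hi hl] := factor_indep c0 (sf_top (S := Rt)) main.
by split.
Qed.
End Main.
Theorem lemma3p2 (R : realType) (d : nat) (dO : measure_display)
  (Omega : measurableType dO) (P : probability Omega R)
  (F : R -> set (set Omega)) (X : R -> Omega -> 'rV[R]_d)
  (Rt : Omega -> \bar R) :
  filtration F -> levy P F X ->
  (forall w, (0 <= Rt w)%E) -> measurable_fun setT Rt ->
  (0 < P (fin Rt))%E ->
  (* (I) *)
  ((indep_cond P (fin Rt) (stopped_field F Rt) (sigmaD (fin Rt) (Delta X Rt)) ->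
    (* (I)(a) *)
    (forall (Pt : Omega -> \bar R) (A : set (Omega * R)),
       (forall w, (0 <= Pt w)%E) -> measurable_fun setT Pt ->
       (0 < P (fin Pt))%E ->
       optional F A -> graph Pt = A `&` graph Rt ->
       indep_cond P (fin Pt) (stopped_field F Pt) (sigmaD (fin Pt) (Delta X Pt)) /\
       (forall G : set (Dsp R d), measurable G ->
          condP P (fin Pt) (Delta X Pt @^-1` G) =
          condP P (fin Rt) (Delta X Rt @^-1` G))) /\
    (* (I)(b) *)
    (forall (Pt : Omega -> \bar R) (Gamma : set (Dsp R d)),
       (forall w, (0 <= Pt w)%E) -> measurable_fun setT Pt ->
       (0 < P (fin Pt))%E ->
       measurable Gamma -> graph Pt = btpre X Gamma `&` graph Rt ->
       indep_cond P (fin Pt) (stopped_field F Pt) (sigmaD (fin Pt) (Delta X Pt)) /\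
       (forall G : set (Dsp R d), measurable G ->
          condP P (fin Pt) (Delta X Pt @^-1` G) =
          condP P (fin Rt) (Delta X Rt @^-1` (G `&` Gamma)) /
          condP P (fin Rt) (Delta X Rt @^-1` Gamma))))) /\
  (* (II) *)
  ((* (II)(i) *)
   (forall (R1 R2 : Omega -> \bar R) (A : set (Omega * R)),
      (forall w, (0 <= R1 w)%E) -> measurable_fun setT R1 -> (0 < P (fin R1))%E ->
      (forall w, (0 <= R2 w)%E) -> measurable_fun setT R2 -> (0 < P (fin R2))%E ->
      indep_cond P (fin R1) (stopped_field F R1) (sigmaD (fin R1) (Delta X R1)) ->
      indep_cond P (fin R2) (stopped_field F R2) (sigmaD (fin R2) (Delta X R2)) ->
      optional F A ->
      eq_evan P (graph R1) (graph Rt `&` A) ->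
      eq_evan P (graph R2) (graph Rt `&` (halfline `\` A)) ->
      (forall G : set (Dsp R d), measurable G ->
         condP P (fin R1) (Delta X R1 @^-1` G) =
         condP P (fin R2) (Delta X R2 @^-1` G)) ->
      indep_cond P (fin Rt) (stopped_field F Rt) (sigmaD (fin Rt) (Delta X Rt)) /\
      (forall G : set (Dsp R d), measurable G ->
         condP P (fin Rt) (Delta X Rt @^-1` G) =
         condP P (fin R1) (Delta X R1 @^-1` G))) /\
   (* (II)(ii) *)
   (forall (R1 R2 : Omega -> \bar R) (Gamma : set (Dsp R d))
           (M : probability (Dsp R d) R),
      (forall w, (0 <= R1 w)%E) -> measurable_fun setT R1 -> (0 < P (fin R1))%E ->
      (forall w, (0 <= R2 w)%E) -> measurable_fun setT R2 -> (0 < P (fin R2))%E ->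
      indep_cond P (fin R1) (stopped_field F R1) (sigmaD (fin R1) (Delta X R1)) ->
      indep_cond P (fin R2) (stopped_field F R2) (sigmaD (fin R2) (Delta X R2)) ->
      measurable Gamma ->
      graph R1 = graph Rt `&` btpre X Gamma ->
      graph R2 = graph Rt `&` btpre X (~` Gamma) ->
      indep_cond P (fin Rt) (stopped_field F Rt)
        (sigmaR (fin Rt) (fun w => (\1_Gamma (Delta X Rt w) : R))) ->
      condP P (fin Rt) (Delta X Rt @^-1` Gamma) = fine (M Gamma) ->
      (forall G : set (Dsp R d), measurable G ->
         condP P (fin R1) (Delta X R1 @^-1` G) =
         fine (M (G `&` Gamma)) / fine (M Gamma)) ->
      (forall G : set (Dsp R d), measurable G ->
         condP P (fin R2) (Delta X R2 @^-1` G) =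
         fine (M (G `&` ~` Gamma)) / fine (M (~` Gamma))) ->
      indep_cond P (fin Rt) (stopped_field F Rt) (sigmaD (fin Rt) (Delta X Rt)) /\
      (forall G : set (Dsp R d), measurable G ->
         condP P (fin Rt) (Delta X Rt @^-1` G) = fine (M G)))).
Proof.
move=> hF hX R0 mR PR; split.
  move=> hI; split.
    by move=> Pt A P0 mP PP hA hg; exact: (partIa R0 mR PR P0 mP PP hA hg hI).
  by move=> Pt Ga P0 mP PP mGa hg; exact: (partIb R0 mR PR P0 mP PP mGa hg hI).
split.
  move=> R1 R2 A R10 mR1 PR1 R20 mR2 PR2 hI1 hI2 hA ev1 ev2 lawE.
  exact: (partIIi hF hX R0 mR PR R10 mR1 PR1 R20 mR2 PR2 hI1 hI2 hA ev1 ev2 lawE).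
move=> R1 R2 Ga M R10 mR1 PR1 R20 mR2 PR2 hI1 hI2 mGa g1 g2 hIR hG law1 law2.
exact: (partIIii hF hX R0 mR PR R10 mR1 PR1 R20 mR2 PR2 hI1 hI2 mGa g1 g2 hIR hG law1 law2).
Qed.
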